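(* For every admissible sequence of bins $\sigma$ and all integers $s',\ell'\ge0$, $R(\sigma,s',0)=\mathrm{OPT}(\sigma,s',0)$ and $R(\sigma,0,\ell')=\mathrm{OPT}(\sigma,0,\ell')$.
   Context: Fix an integer $S>1$, $L=2S-1$, $M=4S-3$. Bins have integer sizes in $[S,M]$ and arrive in a sequence $\sigma$, admissible if it ends with at least as many bins of size $M$ as there are items under consideration. A packing assigns every item to a bin with total item size in each bin at most the bin size; its cost is the sum of the sizes of bins receiving at least one item. A packing is valid if each empty bin is smaller than every item packed in a later bin. A bin is wasteful if its empty space is at least the size of some item packed in a later bin; a packing is thrifty if no bin is wasteful. A partial packing of a finite sequence of bins is reasonable if every bin $b$ of that sequence contains: one item of size $S$ if $\mathrm{size}(b)\in[S,L-1]$; one item of size $L$ if $\mathrm{size}(b)=L$; two items of size $S$ or one item of size $L$ if $\mathrm{size}(b)\in[L+1,L+S-1]$; one item of size $S$ and one of size $L$ if $\mathrm{size}(b)=L+S$; three items of size $S$ or one item of size $S$ and one of size $L$ if $\mathrm{size}(b)\in[L+S+1,2L-1]$. The key bin of a packing is the first bin after which no item of size $L$ remains unpacked or at most two items of size $S$ remain unpacked; the front is the restriction of the packing to the prefix ending with the key bin. A packing is reasonable if it is thrifty and its front is reasonable. $\mathrm{OPT}(\sigma,s,\ell)$ is the minimum cost of a valid packing of $s$ items of size $S$ and $\ell$ items of size $L$ into $\sigma$; $R(\sigma,s,\ell)$ is the maximum cost of a reasonable packing of these items into $\sigma$. *)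

(* Defs.v *)
From mathcomp Require Import all_boot.
Set Implicit Arguments. Unset Strict Implicit. Unset Printing Implicit Defensive.

Definition Lsz (S : nat) : nat := 2 * S - 1.
Definition Msz (S : nat) : nat := 4 * S - 3.

(* A sequence of bins is a list of bin sizes.  Items of equal size are
   indistinguishable, so a packing is given by, for each bin i, the pair
   (number of items of size S, number of items of size L) put in bin i. *)
Definition packing := seq (nat * nat).

Definition load (S : nat) (x : nat * nat) : nat := x.1 * S + x.2 * Lsz S.
Definition nonempty (x : nat * nat) : bool := 0 < x.1 + x.2.

Definition binc (p : packing) (i : nat) : nat * nat := nth (0, 0) p i.
Definition bsz (sigma : seq nat) (i : nat) : nat := nth 0 sigma i.

Definition is_packing (S : nat) (sigma : seq nat) (s l : nat) (p : packing) : Prop :=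
  [/\ size p = size sigma,
      sumn (map fst p) = s,
      sumn (map snd p) = l &
      forall i, i < size p -> load S (binc p i) <= bsz sigma i].

Definition cost (sigma : seq nat) (p : packing) : nat :=
  sumn [seq (if nonempty x.2 then x.1 else 0) | x <- zip sigma p].

Definition valid (S : nat) (sigma : seq nat) (p : packing) : Prop :=
  forall i j, i < j -> j < size p -> ~~ nonempty (binc p i) ->
    (0 < (binc p j).1 -> bsz sigma i < S) /\
    (0 < (binc p j).2 -> bsz sigma i < Lsz S).

Definition wasteful (S : nat) (sigma : seq nat) (p : packing) (i : nat) : Prop :=
  exists j, [/\ i < j, j < size p &
    (0 < (binc p j).1 /\ S <= bsz sigma i - load S (binc p i)) \/
    (0 < (binc p j).2 /\ Lsz S <= bsz sigma i - load S (binc p i))].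

Definition thrifty (S : nat) (sigma : seq nat) (p : packing) : Prop :=
  forall i, i < size p -> ~ wasteful S sigma p i.

Definition reasonable_bin (S c : nat) (x : nat * nat) : bool :=
  let L := Lsz S in
  if (S <= c) && (c <= L - 1) then x == (1, 0)
  else if c == L then x == (0, 1)
  else if (L + 1 <= c) && (c <= L + S - 1) then (x == (2, 0)) || (x == (0, 1))
  else if c == L + S then x == (1, 1)
  else if (L + S + 1 <= c) && (c <= 2 * L - 1) then (x == (3, 0)) || (x == (1, 1))
  else false.

Definition front_len (p : packing) : nat :=
  find (fun k => (sumn (map snd (drop k p)) == 0) || (sumn (map fst (drop k p)) <= 2))
       (iota 0 (size p).+1).

Definition reasonable (S : nat) (sigma : seq nat) (p : packing) : Prop :=
  thrifty S sigma p /\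
  forall i, i < front_len p -> reasonable_bin S (bsz sigma i) (binc p i).

Definition admissible (S : nat) (sigma : seq nat) (n : nat) : Prop :=
  n <= size sigma /\ all (fun c => c == Msz S) (drop (size sigma - n) sigma).

Definition IsOPT (S : nat) (sigma : seq nat) (s l v : nat) : Prop :=
  (exists p, [/\ is_packing S sigma s l p, valid S sigma p & cost sigma p = v]) /\
  (forall p, is_packing S sigma s l p -> valid S sigma p -> v <= cost sigma p).

Definition IsR (S : nat) (sigma : seq nat) (s l v : nat) : Prop :=
  (exists p, [/\ is_packing S sigma s l p, reasonable S sigma p & cost sigma p = v]) /\
  (forall p, is_packing S sigma s l p -> reasonable S sigma p -> cost sigma p <= v).

(* Main.v *)
Require Import Defs.
From mathcomp Require Import all_boot zify.

Definition Thr w (c k : nat -> nat) n := forall i j, i < j -> j < n -> 0 < k j -> c i - k i * w < w.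
Definition Val w (c m : nat -> nat) n := forall i j, i < j -> j < n -> m i = 0 -> 0 < m j -> c i < w.

Lemma key w n c k m : 0 < w ->
  (forall i, i < n -> k i * w <= c i) ->
  (forall i, i < n -> m i * w <= c i) ->
  \sum_(0 <= i < n) k i = \sum_(0 <= i < n) m i ->
  Thr w c k n -> Val w c m n ->
  forall i, i < n -> 0 < k i -> 0 < m i.
Proof.
move=> w0 fk fm Hsum Hk Hm i ltin ki.
rewrite lt0n; apply/negP => /eqP mi0.
have wci : w <= c i by apply: leq_trans (fk i ltin); rewrite leq_pmull.
have mj0 : forall j, i < j < n -> m j = 0.
  move=> j /andP[ij jn]; apply/eqP; rewrite eqn0Ngt; apply/negP => mj.
  by have := Hm i j ij jn mi0 mj; rewrite ltnNge wci.
have mjk : forall j, j < i -> m j <= k j.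
  move=> j ji. have := Hk j i ji ltin ki. have := fm j (ltn_trans ji ltin). nia.
have H1 : \sum_(0 <= j < n) m j <= \sum_(0 <= j < i) k j.
  rewrite (@big_cat_nat _ _ _ i _ _ _ _ (leq0n i) (ltnW ltin)) /= (big_ltn ltin) mi0 add0n.
  have -> : \sum_(i.+1 <= j < n) m j = 0.
    rewrite big_nat_cond; apply: big1 => j /andP[/andP[ij jn] _]; apply: mj0; by rewrite ij jn.
  rewrite addn0.
  rewrite big_nat_cond [X in _ <= X]big_nat_cond; apply: leq_sum => j /andP[/andP[_ ji] _].
  exact: mjk.
have H2 : \sum_(0 <= j < i) k j + k i <= \sum_(0 <= j < n) k j.
  rewrite (@big_cat_nat _ _ _ i _ _ _ _ (leq0n i) (ltnW ltin)) /= (big_ltn ltin) addnA leq_addr //.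
move: H1 H2; rewrite Hsum; lia.
Qed.

Lemma costle w n c k m : 0 < w ->
  (forall i, i < n -> k i * w <= c i) ->
  (forall i, i < n -> m i * w <= c i) ->
  \sum_(0 <= i < n) k i = \sum_(0 <= i < n) m i ->
  Thr w c k n -> Val w c m n ->
  \sum_(0 <= i < n) (if 0 < k i then c i else 0) <= \sum_(0 <= i < n) (if 0 < m i then c i else 0).
Proof.
move=> w0 fk fm Hs Hk Hm.
rewrite big_nat_cond [X in _ <= X]big_nat_cond; apply: leq_sum => i /andP[/andP[_ ltin] _].
case: ifP => // ki; by rewrite (@key w n c k m w0 fk fm Hs Hk Hm i ltin ki).
Qed.

Lemma Thr_Val w c k n : Thr w c k n -> Val w c k n.
Proof. move=> H i j ij jn ki kj; have := H i j ij jn kj; by rewrite ki mul0n subn0. Qed.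

Lemma sumn_nth T (x0 : T) (f : T -> nat) (p : seq T) :
  sumn (map f p) = \sum_(0 <= i < size p) f (nth x0 p i).
Proof.
elim: p => [|x p IH] /=; first by rewrite big_geq.
by rewrite big_nat_recl //= IH.
Qed.

Fixpoint gr (w r : nat) (cs : seq nat) : seq nat :=
  match cs with
  | [::] => [::]
  | c :: cs' => minn r (c %/ w) :: gr w (r - minn r (c %/ w)) cs'
  end.

Lemma gr_size w r cs : size (gr w r cs) = size cs.
Proof. by elim: cs r => //= c cs IH r; rewrite IH. Qed.

Lemma gr_sum_le w r cs : sumn (gr w r cs) <= r.
Proof. elim: cs r => //= c cs IH r; have := IH (r - minn r (c %/ w)); lia. Qed.

Lemma gr_sum w r cs : r <= sumn [seq c %/ w | c <- cs] -> sumn (gr w r cs) = r.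
Proof.
elim: cs r => [|c cs IH] r /=; first by rewrite leqn0 => /eqP.
move=> H; rewrite IH; lia.
Qed.

Lemma gr_fit w r cs i : nth 0 (gr w r cs) i * w <= nth 0 cs i.
Proof.
elim: cs r i => [|c cs IH] r [|i] //=.
apply: leq_trans (leq_divM c w); by rewrite leq_mul2r geq_minr orbT.
Qed.

Lemma sumn_pos (s : seq nat) j : 0 < nth 0 s j -> 0 < sumn s.
Proof. elim: s j => [|x s IH] [|j] //=; [lia| move/IH; lia]. Qed.

Lemma gr_thr w r cs : 0 < w -> Thr w (nth 0 cs) (nth 0 (gr w r cs)) (size cs).
Proof.
move=> w0; elim: cs r => [|c cs IH] r i j //= ij jn kj.
case: i ij => [|i] ij; last first.
  case: j ij jn kj => // j ij jn kj; exact: (IH _ i j).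
case: j ij jn kj => // j _ jn /= /sumn_pos kj.
have := gr_sum_le w (r - minn r (c %/ w)) cs.
have hl : c - c %/ w * w < w.
  have := divn_eq c w; have := ltn_pmod c w0; lia.
move: kj; case: (leqP r (c %/ w)) => h; lia.
Qed.

Definition pr (b : bool) (x : nat * nat) : nat := if b then x.2 else x.1.
Definition mk (b : bool) (t : nat) : nat * nat := if b then (0, t) else (t, 0).
Definition wt (S : nat) (b : bool) : nat := if b then Lsz S else S.

Lemma sum0_nth (f : nat * nat -> nat) p i : f (0,0) = 0 -> sumn (map f p) = 0 -> f (binc p i) = 0.
Proof.
rewrite /binc => f0; elim: p i => [|x p IH] [|i] //= h; [lia| apply: IH; lia].
Qed.

Lemma binc_mk b g i : binc (map (mk b) g) i = mk b (nth 0 g i).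
Proof. rewrite /binc; elim: g i => [|t g IH] [|i] //=; by case: b. Qed.

Lemma sum_mk b g : sumn (map (pr b) (map (mk b) g)) = sumn g /\ sumn (map (pr (~~b)) (map (mk b) g)) = 0.
Proof. elim: g => [|t g [IH1 IH2]] //=; rewrite IH1 IH2; by case: (b) IH1 IH2. Qed.

Lemma cost_eq sigma p : size p = size sigma ->
  cost sigma p = \sum_(0 <= i < size sigma) (if nonempty (binc p i) then bsz sigma i else 0).
Proof.
move=> hs; rewrite /cost (@sumn_nth _ (0,(0,0))) size_zip hs minnn.
apply: eq_big_nat => i _; by rewrite nth_zip.
Qed.

Lemma front0 p : (sumn (map snd p) == 0) || (sumn (map fst p) <= 2) -> front_len p = 0.
Proof. by rewrite /front_len /= drop0 => ->. Qed.

Section Glue.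
Variables (S : nat) (b : bool) (sigma : seq nat) (p : packing).
Hypothesis S1 : 1 < S.
Hypothesis hsz : size p = size sigma.
Hypothesis oth : forall i, pr (~~b) (binc p i) = 0.

Lemma load_pr i : load S (binc p i) = pr b (binc p i) * wt S b.
Proof. have := oth i; rewrite /load /pr /wt; case: b => /= ->; lia. Qed.

Lemma ne_pr i : nonempty (binc p i) = (0 < pr b (binc p i)).
Proof. have := oth i; rewrite /nonempty /pr; case: b => /= ->; by rewrite ?addn0. Qed.

Lemma thr_Thr : thrifty S sigma p -> Thr (wt S b) (bsz sigma) (fun i => pr b (binc p i)) (size sigma).
Proof.
move=> H i j ij jn kj; rewrite -load_pr; rewrite -hsz in jn.
have := H i (ltn_trans ij jn); rewrite /wasteful => nw.
rewrite ltnNge; apply/negP => hw; apply: nw; exists j; split => //.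
move: kj hw; rewrite /pr /wt; case: b => ??; [right|left]; by split.
Qed.

Lemma Thr_thr : Thr (wt S b) (bsz sigma) (fun i => pr b (binc p i)) (size sigma) -> thrifty S sigma p.
Proof.
move=> H i _ [j [ij jn hh]]; rewrite hsz in jn; have := H i j ij jn.
have := oth j; rewrite -load_pr /pr /wt; move: hh; case: b => /= [[[h1 h2]|[h1 h2]]|[[h1 h2]|[h1 h2]]] /=; lia.
Qed.

Lemma val_Val : valid S sigma p -> Val (wt S b) (bsz sigma) (fun i => pr b (binc p i)) (size sigma).
Proof.
move=> H i j ij jn ki kj; rewrite -hsz in jn.
have ne : ~~ nonempty (binc p i) by rewrite ne_pr ki.
have [h1 h2] := H i j ij jn ne; move: kj; rewrite /pr /wt; case: b; auto.
Qed.

Lemma Val_val : Val (wt S b) (bsz sigma) (fun i => pr b (binc p i)) (size sigma) -> valid S sigma p.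
Proof.
move=> H i j ij jn ne; rewrite hsz in jn; have := H i j ij jn.
move: ne; rewrite ne_pr -eqn0Ngt => /eqP k0 /(_ k0) hh.
have := oth j; rewrite /pr /wt in hh k0 *; move: hh k0; case: b => /= hh k0 o; rewrite o; split => // _; exact: hh.
Qed.
End Glue.

Lemma info S b sigma n p : 1 < S ->
  is_packing S sigma (if b then 0 else n) (if b then n else 0) p ->
  [/\ size p = size sigma, forall i, pr (~~b) (binc p i) = 0,
      forall i, i < size sigma -> pr b (binc p i) * wt S b <= bsz sigma i,
      \sum_(0 <= i < size sigma) pr b (binc p i) = n &
      cost sigma p = \sum_(0 <= i < size sigma) (if 0 < pr b (binc p i) then bsz sigma i else 0)].
Proof.
move=> S1 [hs h1 h2 hl].
have s1 : sumn (map (pr b) p) = n by case: (b) h1 h2.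
have s2 : sumn (map (pr (~~b)) p) = 0 by case: (b) h1 h2.
have oth : forall i, pr (~~b) (binc p i) = 0.
  move=> i; apply: sum0_nth s2; by case: (b).
split => //.
- move=> i hi; rewrite -(load_pr S b sigma p S1 hs oth); apply: hl; by rewrite hs.
- by rewrite -hs -(@sumn_nth _ (0,0)).
- rewrite cost_eq //; apply: eq_big_nat => i _; by rewrite (ne_pr b p oth).
Qed.

Lemma capacity S w n sigma : 0 < w -> w <= Msz S -> admissible S sigma n ->
  n <= sumn [seq c %/ w | c <- sigma].
Proof.
move=> w0 wM [hn ha].
rewrite -(cat_take_drop (size sigma - n) sigma) map_cat sumn_cat.
apply: leq_trans (leq_addl _ _).
have : size (drop (size sigma - n) sigma) = n by rewrite size_drop; lia.
move: (drop (size sigma - n) sigma) ha => t; clear hn; elim: t n => [|c t IH] [|n] //= /andP[/eqP -> ht] [hs].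
have := IH n ht hs; have : 0 < Msz S %/ w by rewrite divn_gt0.
lia.
Qed.

Lemma mainb S sigma b n : 1 < S -> admissible S sigma n ->
  exists v, IsOPT S sigma (if b then 0 else n) (if b then n else 0) v /\
            IsR S sigma (if b then 0 else n) (if b then n else 0) v.
Proof.
move=> S1 adm.
have w0 : 0 < wt S b by rewrite /wt /Lsz; case: (b); lia.
have wM : wt S b <= Msz S by rewrite /wt /Lsz /Msz; case: (b); lia.
have cap := @capacity S (wt S b) n sigma w0 wM adm.
set g := gr (wt S b) n sigma; set gp := map (mk b) g.
have prg : forall i, pr b (binc gp i) = nth 0 g i by move=> i; rewrite binc_mk; case: (b).
have othg : forall i, pr (~~b) (binc gp i) = 0 by move=> i; rewrite binc_mk; case: (b).
have hs : size gp = size sigma by rewrite size_map gr_size.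
have gpack : is_packing S sigma (if b then 0 else n) (if b then n else 0) gp.
  have [e1 e2] := sum_mk b g.
  have e3 : sumn g = n by apply: gr_sum.
  rewrite e3 in e1.
  have {}e1 : sumn (map (pr b) gp) = n := e1.
  have {}e2 : sumn (map (pr (~~b)) gp) = 0 := e2.
  split => //.
  - by case: (b) e1 e2 => /= e1 e2; [exact: e2 | exact: e1].
  - by case: (b) e1 e2 => /= e1 e2; [exact: e1 | exact: e2].
  - move=> i hi; rewrite (load_pr S b sigma gp S1 hs othg) prg; exact: gr_fit.
have gthr : Thr (wt S b) (bsz sigma) (fun i => pr b (binc gp i)) (size sigma).
  move=> i j; rewrite !prg; exact: gr_thr.
have [_ _ gfit gsum gcost] := @info S b sigma n gp S1 gpack.
have grs : reasonable S sigma gp.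
  split; first exact: (Thr_thr S b sigma gp S1 hs othg gthr).
  rewrite front0 //.
  have [e1 e2] := sum_mk b g.
  have {}e2 : sumn (map (pr (~~b)) gp) = 0 := e2.
  case: (b) e1 e2 => /= e1 e2.
    have e2' : sumn (map fst gp) = 0 := e2. by rewrite e2' orbT.
  have e2' : sumn (map snd gp) = 0 := e2. by rewrite e2'.
exists (cost sigma gp); split; split.
- exists gp; split; [exact: gpack | exact: (Val_val S b sigma gp hs othg (@Thr_Val _ _ _ _ gthr)) | by []].
- move=> q qp qv; have [qs qo qfit qsum qcost] := @info S b sigma n q S1 qp.
  rewrite gcost qcost; apply: (@costle _ _ _ _ _ w0 gfit qfit) => //.
    by rewrite gsum qsum.
  exact: (val_Val S b sigma q qs qo qv).
- by exists gp.
- move=> q qp [qt _]; have [qs qo qfit qsum qcost] := @info S b sigma n q S1 qp.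
  rewrite gcost qcost; apply: (@costle _ _ _ _ _ w0 qfit gfit) => //.
    by rewrite gsum qsum.
    exact: (thr_Thr S b sigma q S1 qs qo qt).
  exact: (@Thr_Val _ _ _ _ gthr).
Qed.

Theorem proposition3 (S : nat) (sigma : seq nat) :
  1 < S ->
  all (fun c => (S <= c) && (c <= Msz S)) sigma ->
  (forall s', admissible S sigma s' ->
     exists v, IsOPT S sigma s' 0 v /\ IsR S sigma s' 0 v) /\
  (forall l', admissible S sigma l' ->
     exists v, IsOPT S sigma 0 l' v /\ IsR S sigma 0 l' v).
Proof.
move=> S1 _; split => n adm.
- exact: (@mainb S sigma false n S1 adm).
- exact: (@mainb S sigma true n S1 adm).
Qed.
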